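(* Let $g$ be a positive integer and $t\ge 1$. Let $t=\sum_{i=1}^m 2^{u_i}$ be the binary expansion of $t$ with $0\le u_1<u_2<\cdots<u_m$, let $s_k=\sum_{i=k}^m 2^{u_i}$ for $k=1,\ldots,m$, and let $u_0=-1$. Then for $s\in\{1,\ldots,t\}$, $h_t(s)=1$ if and only if $s=s_k-j2^u$ for some $k\in\{1,\ldots,m\}$, some integer $u$ with $u_{k-1}<u\le u_k$ and some $j\in\{0,\ldots,g-1\}$ such that $2^u$ is the largest power of $2$ dividing $s$; in particular $j$ is even if $u=u_k$ and odd otherwise. As a consequence, at any time instant $t$ there are at most $\lceil g/2\rceil(\lfloor\log t\rfloor+1)$ segments that are valid and alive.
   Context: $\log$ denotes base-2 logarithm. For a parameter $g$ and integers $s\ge1$, $t\ge1$: write $s=o2^u$ with $o$ odd and $u\ge0$ (so $2^u$ is the largest power of 2 dividing $s$), and set $h_t(s)=1$ if $s\le t<s+g2^u$ and $h_t(s)=0$ otherwise. Markov weights: given switch probabilities $p(t|t')\in(0,1)$ for $1\le t'<t$, let $\{U_t\}$ be the Markov chain with $U_1=1$ and, for $t'<t$, $\Pr(U_t=t\mid U_{t-1}=t')=p(t|t')=1-\Pr(U_t=t'\mid U_{t-1}=t')$. A transition path $T=(t_1,\ldots,t_C;t)$ (with $1<t_1<\cdots<t_C\le t$) corresponds to the realization $(u_1,\ldots,u_t)$ with $u_{k-1}\ne u_k$ exactly for $k\in\{t_1,\ldots,t_C\}$, and the weight is $w_t(T)=\Pr(U_1=u_1,\ldots,U_t=u_t)$.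 The pruned switch probabilities are $\hat p(t|t')=1-h_t(t')(1-p(t|t'))$, and $\hat w_t$ is the weight function obtained from $\hat p$ in the same way. The segments of a path $T\in\mathcal T_t$ are the intervals $[t_c,t_{c+1})$ between consecutive switch points (with $t_0=1$). A segment is alive at time $t$ if it contains $t$, and valid if there is a path $T_t$ with $\hat w_t(T_t)>0$ that contains exactly that segment. *)

(* Defs.v *)
From HB Require Import structures.
From mathcomp Require Import all_boot all_order all_algebra.
Set Implicit Arguments. Unset Strict Implicit. Unset Printing Implicit Defensive.
Import Order.TTheory GRing.Theory Num.Theory.
Local Open Scope ring_scope.

Definition h (g t s : nat) : bool := ((s <= t) && (t < s + g * 2 ^ logn 2 s))%N.

(* A transition path (t_1,...,t_C; t) is represented by the list of switch
   times ts = [:: t_1; ...; t_C], with 1 < t_1 < ... < t_C <= t. *)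
Definition is_tpath (t : nat) (ts : seq nat) : bool :=
  (sorted ltn ts && all (fun x => (1 < x) && (x <= t)) ts)%N.

(* the realization u_k of the path: the last switch time <= k (or 1). *)
Definition cur (ts : seq nat) (k : nat) : nat :=
  foldr maxn 1%N [seq i <- ts | (i <= k)%N].

(* w_t(T) = Pr(U_1 = u_1, ..., U_t = u_t) for the Markov chain with switch
   probabilities p(k | k'), U_1 = 1. *)
Definition weight (R : pzRingType) (p : nat -> nat -> R) (t : nat) (ts : seq nat) : R :=
  \prod_(2 <= k < t.+1)
     (if k \in ts then p k (cur ts k.-1) else 1 - p k (cur ts k.-1)).

Definition phat (R : pzRingType) (g : nat) (p : nat -> nat -> R) : nat -> nat -> R :=
  fun k k' => 1 - (h g k k')%:R * (1 - p k k').

(* segments [t_c, t_{c+1}) of a path in T_t, with t_0 = 1 and t_{C+1} = t+1;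
   a segment [a, b) is encoded as the pair (a, b). *)
Definition segments (t : nat) (ts : seq nat) : seq (nat * nat) :=
  let b := 1%N :: rcons ts t.+1 in zip b (behead b).

Definition alive (t : nat) (seg : nat * nat) : bool := ((seg.1 <= t) && (t < seg.2))%N.

Definition valid (R : numDomainType) (g : nat) (p : nat -> nat -> R) (t : nat)
  (seg : nat * nat) : Prop :=
  exists ts, [/\ is_tpath t ts, 0 < weight (phat g p) t ts & seg \in segments t ts].

(* s_k (0-indexed k) = \sum_{i >= k} 2^{u_i} *)
Definition sk (us : seq nat) (k : nat) : nat :=
  (\sum_(k <= i < size us) 2 ^ nth 0 us i)%N.

(* Main.v *)
Require Import Defs.
From HB Require Import structures.
From mathcomp Require Import all_boot all_order all_algebra.
From mathcomp Require Import zify.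
Import Order.TTheory GRing.Theory Num.Theory.

Lemma decomp2 s : (0 < s)%N -> exists2 o, odd o & s = (o * 2 ^ logn 2 s)%N.
Proof.
move=> s0; case: (pfactor_coprime (p:=2) isT s0) => o co def.
by exists o => //; rewrite -coprime2n.
Qed.

Section Bin.
Variable us : seq nat.
Hypothesis sus : sorted ltn us.

Lemma us_lt i j : (i < j)%N -> (j < size us)%N -> (nth 0 us i < nth 0 us j)%N.
Proof.
move=> ij js; apply: (sorted_ltn_nth ltn_trans) => //; rewrite inE //.
exact: ltn_trans ij js.
Qed.

Definition lo k := (\sum_(0 <= i < k) 2 ^ nth 0 us i)%N.
Definition bk k := if k is k'.+1 then (nth 0 us k').+1 else 0%N.

Lemma lo_bound k : (k <= size us)%N -> (lo k < 2 ^ bk k)%N.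
Proof.
elim: k => [|k IH] ks; first by rewrite /lo big_geq.
rewrite /lo big_nat_recr //= -/(lo k).
have := IH (ltnW ks).
have hb : (bk k <= nth 0 us k)%N.
  case: k IH ks => [|k] //= _ ks; exact: us_lt.
have := leq_pexp2l (isT : 0 < 2)%N hb.
rewrite expnS; lia.
Qed.

Lemma t_split k : (k <= size us)%N ->
  (\sum_(x <- us) 2 ^ x)%N = (lo k + sk us k)%N.
Proof.
move=> ks; rewrite (big_nth 0) /lo /sk.
by rewrite (@big_cat_nat _ _ _ k) //=.
Qed.

Lemma sk_div k u : (k < size us)%N -> (u <= nth 0 us k)%N ->
  sk us k = (sk us k %/ 2 ^ u * 2 ^ u)%N /\ odd (sk us k %/ 2 ^ u) = (u == nth 0 us k).
Proof.
move=> ks uk.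
have hR : (2 ^ (nth 0 us k).+1 %| \sum_(k.+1 <= i < size us) 2 ^ nth 0 us i)%N.
  rewrite big_nat_cond; apply: dvdn_sum => i; rewrite andbT => /andP [ki iS]; apply: dvdn_exp2l; exact: us_lt.
case/dvdnP: hR => r hr.
have e : sk us k = (2 ^ (nth 0 us k - u) * (2 * r).+1 * 2 ^ u)%N.
  rewrite /sk big_ltn // hr expnS.
  have -> : (2 ^ nth 0 us k = 2 ^ (nth 0 us k - u) * 2 ^ u)%N by rewrite -expnD subnK.
  nia.
rewrite e mulnK ?expn_gt0 //; split => //.
rewrite oddM oddX /=.
rewrite orbF oddM andFb andbT; apply/eqP/eqP; lia.
Qed.

End Bin.

Section Part1.
Variables (g t : nat) (us : seq nat).
Hypothesis sus : sorted ltn us.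
Hypothesis tdef : t = (\sum_(x <- us) 2 ^ x)%N.

Lemma lo_lt k u : (k <= size us)%N -> (k = 0%N \/ (nth 0%N us k.-1 < u)%N) ->
  (lo us k < 2 ^ u)%N.
Proof.
move=> ks hk; apply: (leq_trans (lo_bound _ sus _ ks)); apply: leq_pexp2l => //.
by case: hk => [->|]; case: k ks => //.
Qed.

Lemma part1_fwd s : (1 <= s <= t)%N -> h g t s ->
  exists k u j : nat,
        [/\ (k < size us)%N, k = 0%N \/ (nth 0%N us k.-1 < u)%N,
            (u <= nth 0%N us k)%N, (j < g)%N
          & s = (sk us k - j * 2 ^ u)%N /\ logn 2 s = u].
Proof.
move=> /andP [s1 st] /andP [_ ht].
set u := logn 2 s in ht *.
have [o oo so] := decomp2 _ s1; rewrite -/u in so.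
have Pu : (0 < 2 ^ u)%N by rewrite expn_gt0.
set k := find (fun x => u <= x)%N us.
have hk : k = 0%N \/ (nth 0 us k.-1 < u)%N.
  case E: k => [|k']; [by left | right].
  have := @before_find _ 0 (fun x => u <= x)%N us k'; rewrite -/k E ltnSn.
  by move=> /(_ isT) /= /negbT; rewrite -ltnNge.
have ks : (k <= size us)%N by exact: find_size.
have hlo := lo_lt _ _ ks hk.
have ksz : (k < size us)%N.
  rewrite ltn_neqAle ks andbT; apply/negP => /eqP ek.
  have := t_split _ _ ks; rewrite -tdef /sk ek big_geq // addn0 => et.
  have : (2 ^ u <= s)%N by rewrite so leq_pmull //; case: o oo {so}.
  rewrite ek in hlo; lia.
have uk : (u <= nth 0 us k)%N.
  by apply: (@nth_find _ 0 (fun x => u <= x)%N us); rewrite has_find.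
have [e _] := sk_div _ sus _ _ ksz uk.
set Q := (sk us k %/ 2 ^ u)%N in e.
have et := t_split _ _ ks; rewrite -tdef e in et.
have oQ : (o <= Q)%N.
  rewrite leqNgt; apply/negP => oQ.
  have : ((Q.+1) * 2 ^ u <= o * 2 ^ u)%N by rewrite leq_mul2r oQ orbT.
  lia.
have jg : (Q < o + g)%N.
  rewrite ltnNge; apply/negP => oQ'.
  have : ((o + g) * 2 ^ u <= Q * 2 ^ u)%N by rewrite leq_mul2r oQ' orbT.
  lia.
exists k, u, (Q - o)%N; split => //; first lia.
split => //; rewrite e -mulnBl subKn //.
Qed.

Lemma part1_bwd s k u j : (1 <= s <= t)%N -> (0 < g)%N ->
  (k < size us)%N -> (k = 0%N \/ (nth 0%N us k.-1 < u)%N) ->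
  (u <= nth 0%N us k)%N -> (j < g)%N ->
  s = (sk us k - j * 2 ^ u)%N -> logn 2 s = u -> h g t s.
Proof.
move=> /andP [s1 st] g0 ksz hk uk jg es ls.
rewrite /h st /= ls.
have hlo := lo_lt _ _ (ltnW ksz) hk.
have et := t_split _ _ (ltnW ksz); rewrite -tdef in et.
have : ((j.+1) * 2 ^ u <= g * 2 ^ u)%N by rewrite leq_mul2r jg orbT.
have Pu : (0 < 2 ^ u)%N by rewrite expn_gt0.
nia.
Qed.

Lemma part1_odd s k u j : (1 <= s)%N ->
  (k < size us)%N -> (u <= nth 0%N us k)%N ->
  s = (sk us k - j * 2 ^ u)%N -> logn 2 s = u -> odd j = (u != nth 0%N us k).
Proof.
move=> s1 ksz uk es ls.
have [o oo so] := decomp2 _ s1; rewrite ls in so.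
have [e oQ] := sk_div _ sus _ _ ksz uk.
set Q := (sk us k %/ 2 ^ u)%N in e oQ.
have Pu : (0 < 2 ^ u)%N by rewrite expn_gt0.
rewrite e -mulnBl in es.
have eo : o = (Q - j)%N.
  by apply/eqP; rewrite -(eqn_pmul2r Pu) -so -es.
have jQ : (j <= Q)%N.
  rewrite leqNgt; apply/negP => jQ; move: oo; rewrite eo.
  have -> : (Q - j = 0)%N by lia.
  by [].
rewrite eo oddB // in oo.
by rewrite -oQ; case: (odd Q) (odd j) oo => [] [].
Qed.
End Part1.

Lemma count_odd_iota n m : count odd (iota m n) = (n + odd m)./2.
Proof.
elim: n m => [|n IH] m; first by case: (odd m).
rewrite /= IH /=; case: (odd m) => /=; rewrite ?addn0 ?addn1 ?addnS //.
Qed.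

Lemma part_bound (T : eqType) (f : T -> nat) c n (s : seq T) :
  (forall x, x \in s -> (f x < n)%N) ->
  (forall u, (count (fun x => f x == u) s <= c)%N) -> (size s <= n * c)%N.
Proof.
elim: n s => [|n IH] s hf hc.
  by case: s hf hc => // x s /(_ x); rewrite mem_head => /(_ isT).
rewrite -(count_predC (fun x => f x == n) s) mulSn.
apply: leq_add => //.
rewrite -size_filter; apply: IH.
  move=> x; rewrite mem_filter /= => /andP [xn xs]; have := hf x xs; lia.
move=> u; rewrite count_filter; apply: leq_trans (hc u).
by apply: sub_count => x /andP [].
Qed.

Section Part2.
Variables (g t : nat).

Definition Aset := [seq a <- iota 1 t | h g t a].

Lemma window u : (count (fun a => logn 2 a == u) Aset <= g.+1./2)%N.
Proof.
set P := (2 ^ u)%N.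
have Pu : (0 < P)%N by rewrite expn_gt0.
set q := (t %/ P)%N.
set m := (q.+1 - g)%N.
set n := (q.+1 - m)%N.
set B := [seq a <- Aset | logn 2 a == u].
have hB : forall a, a \in B -> exists2 o, odd o & a = (o * P)%N /\ (m <= o < m + n)%N.
  move=> a; rewrite !mem_filter mem_iota => /andP [/eqP la /andP [ha /andP [a1 _]]].
  have [o oo ao] := decomp2 _ a1; rewrite la in ao.
  exists o => //; split => //.
  move: ha; rewrite /h la => /andP [aT tA].
  have h1 : (o <= q)%N by rewrite leq_divRL // -ao.
  have h2 : (q < o + g)%N by rewrite ltn_divLR // mulnDl -ao.
  rewrite /n /m; lia.
have uB : uniq B by rewrite !filter_uniq // iota_uniq.
have inj : {in B &, injective (fun a => a %/ P)%N}.
  move=> a b /hB [o _ [-> _]] /hB [o' _ [-> _]]; rewrite !mulnK // => ->.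
  by [].
rewrite -size_filter -/B -(size_map (fun a => a %/ P)%N).
apply: (@leq_trans (size [seq o <- iota m n | odd o])).
  apply: uniq_leq_size; first by rewrite map_inj_in_uniq.
  move=> o /mapP [a aB ->]; have [o' oo [ea hm]] := hB a aB.
  by rewrite ea mulnK // mem_filter oo mem_iota.
rewrite size_filter count_odd_iota; apply: half_leq.
case: (odd m); rewrite /n /m; lia.
Qed.

Lemma Aset_bound : (size Aset <= g.+1./2 * (trunc_log 2 t).+1)%N.
Proof.
rewrite mulnC; apply: (@part_bound _ (logn 2)); last exact: window.
move=> a; rewrite mem_filter mem_iota => /andP [_ /andP [a1 aT]].
rewrite ltnS; apply: trunc_log_max => //.
have [o oo ao] := decomp2 _ a1.
apply: leq_trans _ (_ : a <= t)%N; last lia.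
by rewrite {2}ao leq_pmull //; case: o oo {ao}.
Qed.
End Part2.

Lemma seg_alive t T ts x seg : all (fun y => y <= t)%N ts -> (t < T)%N ->
  seg \in zip (x :: rcons ts T) (rcons ts T) -> alive t seg -> seg = (last x ts, T).
Proof.
elim: ts x => [|y ts IH] x /= hall tT.
  by rewrite mem_seq1 => /eqP.
case/andP: hall => yt hall.
rewrite in_cons => /orP [/eqP -> | hs] al; last exact: IH.
by move: al; rewrite /alive /= => /andP [_ ty]; move: (leq_trans ty yt); rewrite ltnn.
Qed.

Lemma last_max x s : path ltn x s -> forall y, y \in x :: s -> (y <= last x s)%N.
Proof.
elim: s x => [|z s IH] x /=.
  by move=> _ y; rewrite mem_seq1 => /eqP ->.
case/andP => xz pz y; rewrite in_cons => /orP [/eqP ->|ys]; last exact: IH.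
apply: leq_trans (ltnW xz) _; apply: IH => //; exact: mem_head.
Qed.

Lemma foldr_ge z s y : y \in z :: s -> (y <= foldr maxn z s)%N.
Proof.
elim: s => [|w s IH] /=; first by rewrite mem_seq1 => /eqP ->.
rewrite !in_cons leq_max => /orP [/eqP ez|/orP [/eqP ->|ys]]; rewrite ?leqnn //.
- by rewrite IH ?orbT // ez mem_head.
- by rewrite IH ?orbT // in_cons ys orbT.
Qed.

Lemma foldr_in z s : foldr maxn z s \in z :: s.
Proof.
elim: s => [|w s IH]; first exact: mem_head.
change (maxn w (foldr maxn z s) \in z :: w :: s).
case: (leqP w (foldr maxn z s)) => hw.
  move: IH; rewrite !in_cons => /orP [->|->]; rewrite ?orbT //.
by rewrite !in_cons eqxx orbT.
Qed.

Import GRing.Theory Num.Theory.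
Local Open Scope ring_scope.

Lemma weight_h (R : numDomainType) g t (p : nat -> nat -> R) ts : (0 < g)%N -> (1 <= t)%N ->
  is_tpath t ts -> 0 < weight (phat g p) t ts -> h g t (last 1%N ts).
Proof.
move=> g0 t1 /andP [sts /allP hts] wpos.
have pth : path ltn 1%N ts.
  case: ts sts hts {wpos} => //= y ts -> /(_ y (mem_head _ _)) /andP [-> _] //.
have lmax := last_max _ _ pth.
have lt : (last 1 ts <= t)%N.
  by move: (mem_last 1%N ts); rewrite in_cons => /orP [/eqP ->|/hts /andP [_ //]].
case: (eqVneq (last 1%N ts) t) => [-> | ne].
  by rewrite /h leqnn /= -{1}[t]addn0 ltn_add2l muln_gt0 g0 expn_gt0.
have tn : t \notin ts.
  apply/negP => tin; have := lmax t; rewrite in_cons tin orbT => /(_ isT); lia.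
have l1 : (1 <= last 1 ts)%N by apply: lmax; exact: mem_head.
have t2 : (2 <= t)%N by lia.
have ecur : cur ts t.-1 = last 1%N ts.
  rewrite /cur (_ : filter _ ts = ts); last first.
    apply/all_filterP/allP => x xs; have := hts x xs.
    have : x != t by apply: contraNneq tn => <-.
    lia.
  by apply: anti_leq; rewrite foldr_ge ?mem_last // lmax // foldr_in.
move: wpos; rewrite /weight big_nat_recr //= (negbTE tn) ecur /phat.
case: (h g t (last 1%N ts)) => //.
by rewrite /= mul0r subr0 subrr mulr0 Order.POrderTheory.ltxx.
Qed.

(* Indices k are 0-based: us = [:: u_1; ...; u_m], nth 0 us k = u_{k+1},
   and the condition u_{k} < u with u_0 = -1 becomes (k = 0 \/ ...). *)
Theorem lemma2 (R : realFieldType) (g t : nat) (us : seq nat)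
    (p : nat -> nat -> R) :
  (0 < g)%N -> (1 <= t)%N ->
  sorted ltn us -> t = (\sum_(x <- us) 2 ^ x)%N ->
  (forall a b : nat, (1 <= b < a)%N -> 0 < p a b < 1) ->
  (forall s : nat, (1 <= s <= t)%N ->
     (h g t s <->
      exists k u j : nat,
        [/\ (k < size us)%N, k = 0%N \/ (nth 0%N us k.-1 < u)%N,
            (u <= nth 0%N us k)%N, (j < g)%N
          & s = (sk us k - j * 2 ^ u)%N /\ logn 2 s = u])
     /\ (forall k u j : nat,
           (k < size us)%N -> (k = 0%N \/ (nth 0%N us k.-1 < u)%N) ->
           (u <= nth 0%N us k)%N -> (j < g)%N ->
           s = (sk us k - j * 2 ^ u)%N -> logn 2 s = u ->
           odd j = (u != nth 0%N us k)))
  /\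
  (forall S : seq (nat * nat), uniq S ->
     (forall seg, seg \in S -> valid g p t seg /\ alive t seg) ->
     (size S <= (g.+1)./2 * (trunc_log 2 t).+1)%N).
Proof.
move=> g0 t1 sus tdef hp; split.
  move=> s hs; split.
    split; first exact: (@part1_fwd g t us sus tdef s hs).
    case=> k [u [j [ks hk uk jg [es ls]]]].
    exact: (@part1_bwd g t us sus tdef s k u j hs g0 ks hk uk jg es ls).
  move=> k u j ks hk uk jg es ls.
  case/andP: hs => s1 _.
  exact: (@part1_odd t us sus tdef s k u j s1 ks uk es ls).
move=> S uS hS.
have key : forall seg, seg \in S -> seg = (seg.1, t.+1) /\ seg.1 \in Aset g t.
  move=> seg /hS [[ts [tp wp sin]] al].
  have tp' := tp; case/andP: tp' => _ /allP hts.
  have hall : all (fun y => y <= t)%N ts.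
    by apply/allP => y /hts /andP [].
  have e := @seg_alive t t.+1 ts 1%N seg hall (ltnSn t) sin al.
  rewrite e /=; split => //.
  rewrite mem_filter mem_iota (@weight_h _ g t p ts g0 t1 tp wp) /=.
  move: (mem_last 1%N ts); rewrite in_cons => /orP [/eqP ->|/hts /andP [a b]].
    by rewrite leqnn add1n ltnS.
  by rewrite add1n ltnS b (ltnW a).
rewrite -(size_map fst); apply: leq_trans (Aset_bound g t).
apply: uniq_leq_size.
  rewrite map_inj_in_uniq // => a b /key [ea _] /key [eb _] eab.
  by rewrite ea eb eab.
by move=> a /mapP [seg sS ->]; exact: (key _ sS).2.
Qed.
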